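(* Let $G$ and $H$ be finite simple graphs. (1) If $g(G)=g(H)=3$, then $G \times H$ is not a cover graph. (2) If $g(G)>3 \geq \chi(H)$, then $G\times H$ is a cover graph.
   Context: $g(G)$ denotes the girth of $G$ (length of a shortest cycle, $\infty$ if $G$ has no cycles) and $\chi(H)$ the chromatic number. A graph is a cover graph if it is the underlying (undirected) graph of the Hasse diagram of some finite partially ordered set. The direct product $G \times H$ has vertex set $V(G)\times V(H)$, with $(g_i,h_s)$ adjacent to $(g_j,h_t)$ if and only if $g_ig_j \in E(G)$ and $h_sh_t \in E(H)$. *)

(* Defs.v *)
(* Finite simple graphs are given as a symmetric irreflexive
   relation [e : rel T] on a finite type [T]. *)
From mathcomp Require Import all_boot.
Set Implicit Arguments. Unset Strict Implicit. Unset Printing Implicit Defensive.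

Section Graphs.
Variable T : finType.
Implicit Type e : rel T.

Definition is_graph_cycle e (s : seq T) : bool :=
  [&& 3 <= size s, uniq s & cycle e s].

Definition has_cycle_of_length e (k : nat) : bool :=
  [exists t : k.-tuple T, is_graph_cycle e t].

(* Girth: length of a shortest cycle; [None] stands for infinity (acyclic).
   A cycle has at most #|T| vertices, so it suffices to search k <= #|T|. *)
Definition girth e : option nat :=
  match [seq k <- iota 0 #|T|.+1 | has_cycle_of_length e k] with
  | k :: _ => Some k
  | [::] => None
  end.

Definition colorable e (k : nat) : bool :=
  [exists f : {ffun T -> 'I_k}, [forall x, forall y, e x y ==> (f x != f y)]].

(* Chromatic number: least k such that e is k-colourable
   ([find] on [iota 0 _] returns that least k; k = #|T| always works). *)
Definition chromatic_number e : nat := find (colorable e) (iota 0 #|T|.+1).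

Definition covers (le : rel T) (x y : T) : bool :=
  [&& x != y, le x y & [forall z, (le x z && le z y) ==> (z == x) || (z == y)]].

Definition is_partial_order (le : rel T) : Prop :=
  reflexive le /\ antisymmetric le /\ transitive le.

Definition cover_graph e : Prop :=
  exists le : rel T, is_partial_order le /\
    forall x y, e x y = covers le x y || covers le y x.
End Graphs.

Definition direct_product (T U : finType) (eG : rel T) (eH : rel U) : rel (T * U) :=
  fun a b => eG a.1 b.1 && eH a.2 b.2.

(* Main.v *)
Require Import Defs.
From mathcomp Require Import all_boot.
From mathcomp Require Import zify.

Section Aux.
Variable T : finType.

Lemma chain_no_cover (le : rel T) : is_partial_order le ->
  forall u v w, covers le u v -> covers le v w ->
  covers le u w || covers le w u -> False.
Proof.
move=> [refl [anti tr]] u v w /and3P[nuv luv /forallP Huv] /and3P[nvw lvw /forallP Hvw].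
have luw := tr _ _ _ luv lvw.
case/orP=> /and3P[nuw lwu /forallP H].
- by move: (H v); rewrite luv lvw /= (negbTE nvw) eq_sym (negbTE nuv).
- have euw : u = w by apply: anti; rewrite luw lwu.
  subst w. have : u = v by apply: anti; rewrite luv lvw.
  by move=> E; rewrite E eqxx in nuv.
Qed.

Lemma triangle_no_cover (le : rel T) : is_partial_order le ->
  forall p q r, covers le p q || covers le q p ->
  covers le q r || covers le r q -> covers le p r || covers le r p -> False.
Proof.
move=> po p q r Hpq Hqr Hpr.
case/orP: Hpq => Hpq; case/orP: Hqr => Hqr.
- exact: (chain_no_cover _ po _ _ _ Hpq Hqr Hpr).
- case/orP: Hpr => Hpr.
  + by apply: (chain_no_cover _ po _ _ _ Hpr Hqr); rewrite ?Hpq ?Hqr ?Hpr ?orbT.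
  + by apply: (chain_no_cover _ po _ _ _ Hpr Hpq); rewrite ?Hpq ?Hqr ?Hpr ?orbT.
- case/orP: Hpr => Hpr.
  + by apply: (chain_no_cover _ po _ _ _ Hpq Hpr); rewrite ?Hpq ?Hqr ?Hpr ?orbT.
  + by apply: (chain_no_cover _ po _ _ _ Hqr Hpr); rewrite ?Hpq ?Hqr ?Hpr ?orbT.
- by apply: (chain_no_cover _ po _ _ _ Hqr Hpq); rewrite orbC.
Qed.

Variable e : rel T.
Hypothesis irr : irreflexive e.

Lemma tri_cycle a b c : e a b -> e b c -> e c a -> has_cycle_of_length e 3.
Proof.
move=> ab bc ca; apply/existsP; exists [tuple a; b; c].
rewrite /is_graph_cycle /= ab bc ca /= !inE !andbT.
have nab : a != b by apply/eqP=> E; rewrite E irr in ab.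
have nbc : b != c by apply/eqP=> E; rewrite E irr in bc.
have nca : c != a by apply/eqP=> E; rewrite E irr in ca.
by rewrite nbc negb_or nab eq_sym nca.
Qed.

Lemma cycle3_tri : has_cycle_of_length e 3 ->
  exists a b c, [/\ e a b, e b c & e c a].
Proof.
case/existsP=> [[s Hs]]; rewrite /is_graph_cycle /=.
case: s Hs => [|a [|b [|c [|]]]] //= _.
by case/and5P=> _ ab bc ca _; exists a, b, c.
Qed.

Lemma girth_le3 : has_cycle_of_length e 3 -> exists k, girth e = Some k /\ k <= 3.
Proof.
move=> H.
have card3 : 3 <= #|T|.
  case/existsP: H => t /and3P[_ u _].
  have := max_card (mem (tval t)).
  by move/card_uniqP: u => ->; rewrite size_tuple.
rewrite /girth.
have mem : 3 \in [seq k <- iota 0 #|T|.+1 | has_cycle_of_length e k].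
  by rewrite mem_filter H mem_iota /=. 
have srt := sorted_filter ltn_trans (has_cycle_of_length e) (iota_ltn_sorted 0 #|T|.+1).
move: mem srt.
case: [seq k <- iota 0 #|T|.+1 | has_cycle_of_length e k] => // k s.
rewrite inE => /orP[/eqP -> _|m P]; first by exists k.
exists k; split => //.
have := order_path_min ltn_trans P => /allP /(_ _ m); lia.
Qed.
End Aux.
Arguments cycle3_tri {T e}.
Arguments girth_le3 {T e}.
Arguments tri_cycle {T e}.
Arguments triangle_no_cover {T le}.

Lemma color3 (U : finType) (eH : rel U) (irrH : irreflexive eH) :
  chromatic_number eH <= 3 ->
  exists c : {ffun U -> 'I_3}, forall x y, eH x y -> c x != c y.
Proof.
rewrite /chromatic_number => Hk.
case: (boolP (has (colorable eH) (iota 0 #|U|.+1))) => Hh.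
- have := nth_find 0 Hh; rewrite nth_iota; last by move: Hh; rewrite has_find size_iota.
  rewrite add0n => /existsP[f /forallP Hf].
  exists [ffun x => widen_ord Hk (f x)] => x y xy; rewrite !ffunE.
  have := Hf x => /forallP /(_ y); rewrite xy /=.
  by apply: contra => /eqP [] E; apply/eqP/val_inj.
- move: Hk; rewrite has_find -leqNgt size_iota in Hh.
  have := find_size (colorable eH) (iota 0 #|U|.+1).
  rewrite size_iota => H1 H2.
  have Hc : #|U| <= 3 by lia.
  exists [ffun x => widen_ord Hc (enum_rank x)] => x y xy; rewrite !ffunE.
  apply/negP => /eqP [] E.
  have : x = y by apply: enum_rank_inj; apply: val_inj.
  by move=> E'; rewrite E' irrH in xy.
Qed.

Lemma girth_some (T : finType) (e : rel T) k :
  girth e = Some k -> has_cycle_of_length e k.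
Proof.
rewrite /girth; case E: [seq k <- iota 0 #|T|.+1 | has_cycle_of_length e k] => [|k' s] //= [<-].
have : k' \in [seq k <- iota 0 #|T|.+1 | has_cycle_of_length e k] by rewrite E inE eqxx.
by rewrite mem_filter => /andP[].
Qed.

Arguments girth_some {T e k}.
Arguments color3 {U eH}.

Theorem theorem6 (T U : finType) (eG : rel T) (eH : rel U)
  (symG : symmetric eG) (irrG : irreflexive eG)
  (symH : symmetric eH) (irrH : irreflexive eH) :
  (girth eG = Some 3 -> girth eH = Some 3 ->
     ~ cover_graph (direct_product eG eH)) /\
  ((match girth eG with None => true | Some g => 3 < g end) ->
     chromatic_number eH <= 3 ->
     cover_graph (direct_product eG eH)).
Proof.
split.
- move=> gG gH [le [po Hle]].
  have [a1 [a2 [a3 [e12 e23 e31]]]] := cycle3_tri (girth_some gG).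
  have [b1 [b2 [b3 [f12 f23 f31]]]] := cycle3_tri (girth_some gH).
  apply: (triangle_no_cover po (a1,b1) (a2,b2) (a3,b3));
    rewrite -Hle /direct_product /= ?e12 ?e23 ?f12 ?f23 //.
  by rewrite symG e31 symH f31.
- move=> gG Hc; have [c Hc'] := color3 irrH Hc.
  have notri : forall a b d, eG a b -> eG b d -> eG d a -> False.
    move=> a b d ab bd da.
    have [k [Ek k3]] := girth_le3 (tri_cycle irrG _ _ _ ab bd da).
    by rewrite Ek in gG; lia.
  set eP := direct_product eG eH.
  have symP : forall x y, eP x y = eP y x.
    by move=> x y; rewrite /eP /direct_product symG symH.
  pose cc (x : T * U) := nat_of_ord (c x.2).
  pose le := fun x y : T * U => (x == y) || (eP x y && (cc x < cc y)) ||
     [&& cc x == 0, cc y == 2 & [exists z, [&& eP x z, eP z y & cc z == 1]]].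
  have hb : forall x, cc x < 3 by move=> x; exact: ltn_ord.
  have hprop : forall x y, eP x y -> cc x != cc y.
    move=> x y /andP[_ /Hc'] h; apply: contra h => /eqP h; apply/eqP/val_inj.
    exact: h.
  have hlt : forall x y, le x y -> x != y -> cc x < cc y.
    move=> x y; rewrite /le => /orP[/orP[/eqP -> |/andP[_ //]]|/and3P[/eqP -> /eqP -> _]] //.
    by rewrite eqxx.
  have cov : forall x y, eP x y -> cc x < cc y -> covers le x y.
    move=> x y exy lxy; apply/and3P; split.
    * by apply/eqP=> E; subst; rewrite ltnn in lxy.
    * by rewrite /le exy lxy orbT.
    * apply/forallP=> z; apply/implyP=> /andP[hxz hzy].
      case: (eqVneq z x) => //= nzx; case: (eqVneq z y) => //= nzy; exfalso.
      have l1 : cc x < cc z by apply: (hlt _ _ hxz); rewrite eq_sym.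
      have l2 := hlt _ _ hzy nzy.
      have [hx [hz hy]] : cc x = 0 /\ cc z = 1 /\ cc y = 2.
        by have := hb x; have := hb y; lia.
      move: hxz hzy; rewrite /le.
      move=> /orP[/orP[/eqP E|/andP[exz _]]|/and3P[_ /eqP E _]];
        [by rewrite E eqxx in nzx| |by rewrite hz in E].
      move=> /orP[/orP[/eqP E|/andP[ezy _]]|/and3P[/eqP E _ _]];
        [by rewrite E eqxx in nzy| |by rewrite hz in E].
      apply: (notri x.1 z.1 y.1); first by case/andP: exz.
        by case/andP: ezy.
      by move: exy; rewrite symP => /andP[].
  have cov2 : forall x y, covers le x y -> eP x y.
    move=> x y /and3P[nxy lxy /forallP H].
    move: lxy; rewrite /le (negbTE nxy) /=.
    case/orP => [/andP[//]|/and3P[/eqP x0 /eqP y2 /existsP[z /and3P[exz ezy /eqP z1]]]].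
    exfalso; move: (H z); rewrite /le exz ezy x0 y2 z1 /= !orbT /=.
    by move=> /orP[/eqP E|/eqP E]; rewrite E ?x0 ?y2 in z1.
  exists le; split.
  + split; first by move=> x; rewrite /le eqxx.
    split.
    * move=> x y /andP[h1 h2]; apply/eqP; apply/negPn/negP => n.
      have := hlt _ _ h1 n; have : y != x by rewrite eq_sym.
      move/(hlt _ _ h2); lia.
    * move=> y x z hxy hyz.
      case: (eqVneq x y) => [-> //|nxy]; case: (eqVneq y z) => [<- //|nyz].
      move: hxy hyz; rewrite /le (negbTE nxy) (negbTE nyz) /=.
      case/orP=> [/andP[exy lxy]|/and3P[/eqP x0 /eqP y2 _]];
        case/orP=> [/andP[eyz lyz]|/and3P[/eqP y0 /eqP z2 _]].
      -- have [hx [hy hz]] : cc x = 0 /\ cc y = 1 /\ cc z = 2.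
           by have := hb x; have := hb z; lia.
         apply/orP; right; rewrite hx hz /=; apply/existsP; exists y.
         by rewrite exy eyz hy.
      -- by rewrite y0 in lxy.
      -- by move: (hb z); rewrite y2 in lyz; lia.
      -- by rewrite y2 in y0.
  + move=> x y; apply/idP/idP.
    * move=> exy; have := hprop _ _ exy.
      case: (ltngtP (cc x) (cc y)) => // h _.
      -- by rewrite cov.
      -- by apply/orP; right; apply: cov; rewrite // symP.
    * by case/orP=> /cov2 //; rewrite symP.
Qed.
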